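(* In generalized non-signalling theory (box world), let $A_1,A_2,B_1,\ldots,B_n$ be a composite system of boxes in which the boxes $B_1,\ldots,B_n$ are classical (each has exactly one possible input), while $A_1$ and $A_2$ may be non-classical. Then every measurement on this system is either a basic measurement or a probabilistic mixture of basic measurements.
   Context: Box world (GNST): a box is a system with a finite set of inputs (fiducial measurements) $x$ and a finite set of outputs $a$. A system of $n$ boxes has states $\mathbf{p}$ given by all collections of numbers $p(\mathbf{a}|\mathbf{x})=p(a_1,\ldots,a_n|x_1,\ldots,x_n)\ge 0$ (one for each tuple of outputs $\mathbf{a}$ and tuple of inputs $\mathbf{x}$) satisfying normalization $\sum_{\mathbf{a}}p(\mathbf{a}|\mathbf{x})=1$ for all $\mathbf{x}$ and the no-signalling conditions: for each $i$, $\sum_{a_i}p(a_1,\ldots,a_n|x_1,\ldots,x_i,\ldots,x_n)$ does not depend on $x_i$. Reduced states are obtained by summing out outputs. An effect is any linear map $\mu$ from the set of states to $[0,1]$; a vector $\mathbf{R}$ (indexed by pairs $(\mathbf{a},\mathbf{x})$) represents $\mu$ if $\mu(\mathbf{p})=\sum_{\mathbf{a},\mathbf{x}}p(\mathbf{a}|\mathbf{x})R(\mathbf{a}|\mathbf{x})$ for all states $\mathbf{p}$. A measurement is a finite set of pairs $(r,\mu_r)$ of outcomes and effects with $\sum_r\mu_r$ equal to the constant map $1$; every such set is an allowed measurement. A basic measurement is one performed as follows: choose a box and an input for it and observe its output; based on the outputs obtained so far, choose a not-yet-measured box and an input for it; repeat until all boxes are measured; then output $r(\mathbf{a})$, a deterministic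 function of the full output tuple $\mathbf{a}$. Its effect for outcome $\hat r$ is represented by the vector with $R(\mathbf{a}|\mathbf{x})=1$ if $r(\mathbf{a})=\hat r$ and $\mathbf{x}=\mathbf{x}(\mathbf{a})$ (the inputs used when outputs $\mathbf{a}$ occur), and $0$ otherwise. A measurement $\{(r,\mu_r)\}$ is a mixture of basic measurements if there are basic measurements $\{(r,\mu^{(j)}_r)\}$ and probabilities $q_j$ with $\mu_r=\sum_j q_j\mu^{(j)}_r$ for all $r$. *)

(* Defs.v *)
From HB Require Import structures.
From mathcomp Require Import all_boot all_order all_algebra.
From mathcomp Require Import reals.
Set Implicit Arguments. Unset Strict Implicit. Unset Printing Implicit Defensive.
Import Order.TTheory GRing.Theory Num.Theory.
Local Open Scope ring_scope.

Section BoxWorld.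
Variables (R : realType) (m : nat) (Inp Out : 'I_m -> finType).

Definition outs := {dffun forall i : 'I_m, Out i}.
Definition ins := {dffun forall i : 'I_m, Inp i}.

(* candidate state: the table of numbers p(a|x) *)
Definition table := outs -> ins -> R.

Definition is_state (p : table) : Prop :=
  [/\ forall a x, 0 <= p a x,
      forall x, \sum_(a : outs) p a x = 1 &
      (* no-signalling: summing out a_i gives a quantity independent of x_i *)
      forall (i : 'I_m) (x x' : ins) (a : outs),
        (forall j, j != i -> x j = x' j) ->
        \sum_(b : outs | [forall j, (j != i) ==> (b j == a j)]) p b x =
        \sum_(b : outs | [forall j, (j != i) ==> (b j == a j)]) p b x'].

(* an effect: a map from states to [0,1] that is linear, i.e. represented by a
   vector Rv indexed by pairs (a,x) *)
Definition is_effect (mu : table -> R) : Prop :=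
  (exists Rv : outs -> ins -> R,
      forall p, is_state p -> mu p = \sum_(a : outs) \sum_(x : ins) p a x * Rv a x)
  /\ (forall p, is_state p -> 0 <= mu p <= 1).

Definition is_measurement (Rt : finType) (M : Rt -> table -> R) : Prop :=
  (forall r, is_effect (M r)) /\
  (forall p, is_state p -> \sum_(r : Rt) M r p = 1).

(* adapt S C g : the input assignment g (inputs used when outputs a occur) can
   be produced by an adaptive sequential procedure, where S is the set of boxes
   not yet measured and C the set of output tuples consistent with the outputs
   observed so far. At each step a not-yet-measured box i and an input xi for
   it are chosen (depending only on the history), and the procedure continues
   separately for each possible output of box i. *)
Inductive adapt (g : outs -> ins) : {set 'I_m} -> pred outs -> Prop :=
| adapt_done (C : pred outs) : adapt g set0 C
| adapt_step (S : {set 'I_m}) (C : pred outs) (i : 'I_m) (xi : Inp i) :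
    i \in S ->
    (forall a, C a -> g a i = xi) ->
    (forall ai : Out i, adapt g (S :\ i) (fun a => C a && (a i == ai))) ->
    adapt g S C.

Definition is_basic (Rt : finType) (B : Rt -> table -> R) : Prop :=
  exists (g : outs -> ins) (rf : outs -> Rt),
    adapt g [set: 'I_m] predT /\
    forall r p, is_state p ->
      B r p = \sum_(a : outs) \sum_(x : ins)
                 p a x * (if (rf a == r) && (x == g a) then 1 else 0).

Definition is_mixture_of_basic (Rt : finType) (M : Rt -> table -> R) : Prop :=
  exists (J : finType) (q : J -> R) (B : J -> Rt -> table -> R),
    [/\ forall j, 0 <= q j,
        \sum_(j : J) q j = 1,
        forall j, is_basic (B j) &
        forall r p, is_state p -> M r p = \sum_(j : J) q j * B j r p].

End BoxWorld.

(* Main.v *)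
From HB Require Import structures.
From mathcomp Require Import all_boot all_order all_algebra.
From mathcomp Require Import reals ring lra.
Require Import Defs.
From Stdlib Require Import ClassicalEpsilon.
Set Implicit Arguments. Unset Strict Implicit. Unset Printing Implicit Defensive.
Import Order.TTheory GRing.Theory Num.Theory.
Local Open Scope ring_scope.

Section FM.
Variable R : realFieldType.

Definition fm_feas d (I : finType) (u : I -> 'I_d -> R) (b : I -> R) :=
  exists z : 'I_d -> R, forall i, \sum_j u i j * z j <= b i.
Definition fm_cert d (I : finType) (u : I -> 'I_d -> R) (b : I -> R) :=
  exists l : I -> R, [/\ forall i, 0 <= l i,
     forall j, \sum_i l i * u i j = 0 & \sum_i l i * b i < 0].

Section Step.
Variables (I : finType) (c : I -> R).
Definition fe i : R := if c i == 0 then 1 else 0.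
Definition fcond p q := (0 < c p) && (c q < 0).
Definition fa p q : R := if fcond p q then - c q else 0.
Definition fb p q : R := if fcond p q then c p else 0.
Definition flift (w : I -> R) (k : (I + I * I)%type) : R :=
  match k with
  | inl i => fe i * w i
  | inr pq => fa pq.1 pq.2 * w pq.1 + fb pq.1 pq.2 * w pq.2
  end.
Definition flam (l' : (I + I * I)%type -> R) (i : I) : R :=
  l' (inl i) * fe i + \sum_k l' (inr (i, k)) * fa i k
                    + \sum_k l' (inr (k, i)) * fb k i.

Lemma flam_ident l' (w : I -> R) :
  \sum_i flam l' i * w i = \sum_k l' k * flift w k.
Proof.
rewrite big_sumType /=.
under eq_bigr do rewrite /flam !mulrDl.
rewrite !big_split /= -addrA; congr (_ + _).
  by apply: eq_bigr => i _; rewrite mulrA.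
rewrite (_ : \sum_(i : I * I) l' (inr i) * (fa i.1 i.2 * w i.1 + fb i.1 i.2 * w i.2)
   = \sum_p \sum_q l' (inr (p, q)) * (fa p q * w p + fb p q * w q)); last first.
  by rewrite pair_bigA; apply: eq_bigr => -[p q] _.

under [RHS]eq_bigr do (under eq_bigr do rewrite mulrDr); rewrite /=.
under [RHS]eq_bigr do rewrite big_split /=.
rewrite big_split /=; congr (_ + _).
  apply: eq_bigr => i _; rewrite mulr_suml; apply: eq_bigr => k _.
  by rewrite !mulrA.
rewrite exchange_big /=; apply: eq_bigr => i _; rewrite mulr_suml.
by apply: eq_bigr => k _; rewrite !mulrA.
Qed.

Lemma flift_c k : flift c k = 0.
Proof.
case: k => [i|[p q]] /=; rewrite /fe /fa /fb.
  by case: eqP => [->|]; rewrite ?mulr0 ?mul0r.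
by case: ifP => _; [rewrite mulNr mulrC addNr | rewrite !mul0r addr0].
Qed.

Lemma flam_ge0 l' : (forall k, 0 <= l' k) -> forall i, 0 <= flam l' i.
Proof.
move=> H i; rewrite /flam; apply: addr_ge0; first apply: addr_ge0.
- by apply: mulr_ge0 => //; rewrite /fe; case: ifP.
- apply: sumr_ge0 => k _; apply: mulr_ge0 => //; rewrite /fa /fcond.
  by case: ifP => // /andP [_ h]; rewrite oppr_ge0 ltW.
- apply: sumr_ge0 => k _; apply: mulr_ge0 => //; rewrite /fb /fcond.
  by case: ifP => // /andP [h _]; rewrite ltW.
Qed.
End Step.

Lemma flift_sum d (I : finType) (c : I -> R) (v : I -> 'I_d -> R) (z : 'I_d -> R) k :
  \sum_j flift c (fun i => v i j) k * z j = flift c (fun i => \sum_j v i j * z j) k.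
Proof.
case: k => [i|[p q]] /=.
  by rewrite mulr_sumr; apply: eq_bigr => j _; rewrite mulrA.
rewrite !mulr_sumr -big_split /=; apply: eq_bigr => j _.
by rewrite mulrDl !mulrA.
Qed.

Lemma fm_all d : forall (I : finType) (u : I -> 'I_d -> R) (b : I -> R),
  fm_feas u b \/ fm_cert u b.
Proof.
elim: d => [|d IH] I u b.
  case: (boolP [forall i, 0 <= b i]) => [/forallP H|].
    left; exists (fun _ => 0) => i; by rewrite big_ord0.
  rewrite negb_forall => /existsP [i0 Hi0].
  right; exists (fun i => if i == i0 then 1 else 0); split.
  - by move=> i; case: ifP.
  - by case.
  - rewrite (bigD1 i0) //= eqxx mul1r big1 ?addr0; first by rewrite ltNge.
    by move=> i /negbTE ->; rewrite mul0r.
pose c i := u i ord_max.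
pose v i j := u i (lift ord_max j).
have Hsplit : forall i (z : 'I_d.+1 -> R),
    \sum_j u i j * z j = \sum_j v i j * z (lift ord_max j) + c i * z ord_max.
  by move=> i z; rewrite big_ord_recr /=; congr (_ + _); apply: eq_bigr => j _;
     rewrite /v (_ : lift ord_max j = widen_ord (leqnSn d) j) //;
     apply: val_inj; rewrite /= /bump leqNgt ltn_ord.
case: (IH _ (fun k j => flift c (fun i => v i j) k) (flift c b)).
- move=> [z' Hz'].
  pose s i := \sum_j v i j * z' j.
  have Hd : forall k, flift c s k <= flift c b k.
    by move=> k; have := Hz' k; rewrite flift_sum.
  pose L q := (b q - s q) / c q.
  pose U p := (b p - s p) / c p.
  pose M := \big[Order.max/0]_(q | c q < 0) L q.
  pose zd := \big[Order.min/M]_(p | 0 < c p) U p.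
  have LU : forall p q, 0 < c p -> c q < 0 -> L q <= U p.
    move=> p q hp hq; have := Hd (inr (p, q)).
    rewrite /= /fa /fb /fcond hp hq /= => h.
    rewrite /U ler_pdivlMr //.
    set X := L q.
    have eX : b q - s q = X * c q by rewrite /X /L divfK // ltr0_neq0.
    have eX' : c p * (b q - s q) = c p * (X * c q) by rewrite eX.
    have e : (- c q) * (b p - s p - X * c p) = (- c q * b p + c p * b q)
       - (- c q * s p + c p * s q) - (c p * (b q - s q) - c p * (X * c q)) by ring.
    rewrite eX' subrr subr0 in e.
    have : 0 <= (- c q) * (b p - s p - X * c p) by rewrite e subr_ge0.
    rewrite pmulr_rge0 ?oppr_gt0 // => h3; lra.
  have HL : forall q, c q < 0 -> L q <= zd.
    move=> q hq; apply: le_bigmin.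
      by apply: le_bigmax_cond.
    by move=> p hp; apply: LU.
  have HU : forall p, 0 < c p -> zd <= U p.
    by move=> p hp; apply: bigmin_le_cond.
  left; exists (fun j => match unlift ord_max j with Some j' => z' j' | None => zd end).
  move=> i; rewrite Hsplit unlift_none.
  under eq_bigr do rewrite liftK.
  rewrite -/(s i).
  case: (ltrgt0P (c i)) => hc.
  + have := HU i hc; rewrite /U ler_pdivlMr // => h.
    rewrite /c in hc h *; lra.
  + have := HL i hc; rewrite /L ler_ndivrMr // => h.
    rewrite /c in hc h *; lra.
  + move: hc; rewrite /c => hc.
    have hc0 : u i ord_max == 0 by apply/eqP.
    have := Hd (inl i); rewrite /= /fe /c hc0 !mul1r => h.
    rewrite (eqP hc0) mul0r addr0; exact: h.
- move=> [l' [Hl'0 Hl'u Hl'b]].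
  right; exists (flam c l'); split.
  + exact: flam_ge0.
  + move=> j; case: (unliftP ord_max j) => [j'|] ->.
      rewrite (_ : \sum_i flam c l' i * u i (lift ord_max j') = \sum_i flam c l' i * v i j') //.
      rewrite flam_ident; exact: Hl'u.
    rewrite (_ : \sum_i flam c l' i * u i ord_max = \sum_i flam c l' i * c i) //.
    rewrite flam_ident big1 // => k _; by rewrite flift_c mulr0.
  + by rewrite flam_ident.
Qed.

End FM.

Section Farkas.
Variable R : realFieldType.
Lemma farkas (V K : finType) (H : K -> V -> R) (f : V -> R) :
  (forall p : V -> R, (forall v, 0 <= p v) -> (forall k, \sum_v H k v * p v = 0) ->
     0 <= \sum_v f v * p v) ->
  exists y : K -> R, forall v, 0 <= f v - \sum_k y k * H k v.
Proof.
move=> Hp.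
have re : forall G : 'I_#|K| -> R, \sum_j G j = \sum_k G (enum_rank k).
  move=> G; rewrite (reindex enum_rank) //; exists enum_val => x _.
    exact: enum_rankK.
  exact: enum_valK.
case: (fm_all (fun v (j : 'I_#|K|) => H (enum_val j) v) f).
- move=> [z Hz]; exists (fun k => z (enum_rank k)) => v.
  rewrite subr_ge0; have := Hz v; rewrite re.
  by under eq_bigr do rewrite enum_rankK mulrC.
- move=> [l [Hl0 Hlu Hlb]].
  suff HH : forall k, \sum_v H k v * l v = 0.
    have := Hp l Hl0 HH; under eq_bigr do rewrite mulrC.
    by rewrite leNgt Hlb.
  move=> k; have := Hlu (enum_rank k); rewrite enum_rankK => E.
  by apply: etrans E; apply: eq_bigr => v _; rewrite mulrC.
Qed.
End Farkas.
Section ML.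
Variable R : realFieldType.
Lemma ML (I J : finType) (w : I -> J -> R) (h : J -> R) (i0 : I) :
  (forall i, \sum_j w i j = 1) ->
  \sum_(f : {ffun I -> J}) (\prod_i w i (f i)) * h (f i0) = \sum_j w i0 j * h j.
Proof.
move=> hw.
pose F i j := if i == i0 then w i j * h j else w i j.
have E : \prod_i \sum_j F i j = \sum_j w i0 j * h j.
  rewrite (bigD1 i0) //= [X in _ * X]big1; last by move=> i /negbTE hi; rewrite /F hi hw.
  by rewrite mulr1 /F eqxx.
rewrite bigA_distr_bigA in E; rewrite -E.
apply: eq_bigr => f _; rewrite (bigD1 i0) //= [in RHS](bigD1 i0) //= /F eqxx.
rewrite mulrAC; congr (_ * _); apply: eq_bigr => i /negbTE ->; done.
Qed.

Lemma ML1 (I J : finType) (w : I -> J -> R) :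
  (forall i, \sum_j w i j = 1) ->
  \sum_(f : {ffun I -> J}) \prod_i w i (f i) = 1.
Proof.
move=> hw; rewrite -bigA_distr_bigA big1 // => i _; exact: hw.
Qed.
End ML.


Section Box.
Variables (R : realType) (n : nat) (Inp Out : 'I_n.+2 -> finType).
Local Notation O := (outs Out).
Local Notation I := (ins Inp).
Local Notation tbl := (table R Inp Out).

Definition agrO (P : pred 'I_n.+2) (a b : O) := [forall j, P j || (a j == b j)].
Definition agrI (P : pred 'I_n.+2) (a b : I) := [forall j, P j || (a j == b j)].

Lemma agrO_refl P a : agrO P a a.
Proof. by apply/forallP => j; rewrite eqxx orbT. Qed.
Lemma agrO_sym P a b : agrO P a b = agrO P b a.
Proof. by apply: eq_forallb => j; rewrite eq_sym. Qed.
Lemma agrO_trans P a b c : agrO P a b -> agrO P b c -> agrO P a c.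
Proof.
move=> /forallP h1 /forallP h2; apply/forallP => j.
by case/orP: (h1 j) => [->//|/eqP ->]; rewrite h2.
Qed.
Lemma agrO_mono (P Q : pred 'I_n.+2) a b : (forall j, P j -> Q j) -> agrO P a b -> agrO Q a b.
Proof.
move=> hPQ /forallP h; apply/forallP => j; case/orP: (h j) => [/hPQ ->//|->]; exact: orbT.
Qed.
Lemma agrI_refl P a : agrI P a a.
Proof. by apply/forallP => j; rewrite eqxx orbT. Qed.
Lemma agrI_sym P a b : agrI P a b = agrI P b a.
Proof. by apply: eq_forallb => j; rewrite eq_sym. Qed.
Lemma agrI_trans P a b c : agrI P a b -> agrI P b c -> agrI P a c.
Proof.
move=> /forallP h1 /forallP h2; apply/forallP => j.
by case/orP: (h1 j) => [->//|/eqP ->]; rewrite h2.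
Qed.

Lemma agrO_ns i (a b : O) : [forall j, (j != i) ==> (b j == a j)] = agrO (pred1 i) b a.
Proof. by apply: eq_forallb => j /=; case: (j =P i). Qed.
Lemma agrI_ns i (a b : I) : [forall j, (j != i) ==> (b j == a j)] = agrI (pred1 i) b a.
Proof. by apply: eq_forallb => j /=; case: (j =P i). Qed.

Definition Kt := (('I_n.+2 * (I * I * O)) + (I * I))%type.
Definition HK (k : Kt) (v : O * I) : R :=
  match k with
  | inl (i, (x, x', a)) =>
      if agrI (pred1 i) x x' then
        (if agrO (pred1 i) v.1 a then 1 else 0) * ((v.2 == x)%:R - (v.2 == x')%:R)
      else 0
  | inr (x, x') => (v.2 == x)%:R - (v.2 == x')%:R
  end.

Definition dot (f : O * I -> R) (p : tbl) := \sum_(v : O * I) f v * p v.1 v.2.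

Lemma dotE f p : dot f p = \sum_a \sum_x f (a, x) * p a x.
Proof. by rewrite /dot pair_bigA; apply: eq_bigr => -[]. Qed.

Lemma sum_delta (x : I) (F : I -> R) : \sum_z ((z == x)%:R * F z) = F x.
Proof.
rewrite (bigD1 x) //= eqxx mul1r big1 ?addr0 // => z /negbTE ->; by rewrite mul0r.
Qed.

Lemma state_cone p : is_state p -> forall k, dot (HK k) p = 0.
Proof.
move=> [_ hN hNS] k; case: k => [[i [[x x'] a]]|[x x']]; rewrite dotE /=.
- case hxx' : (agrI (pred1 i) x x'); last first.
    by rewrite big1 // => b _; rewrite big1 // => z _; rewrite mul0r.
  transitivity (\sum_(b | agrO (pred1 i) b a) p b x - \sum_(b | agrO (pred1 i) b a) p b x').
    rewrite -sumrB [RHS]big_mkcond /=; apply: eq_bigr => b _.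
    under eq_bigr do rewrite -mulrA mulrBl mulrBr.
    rewrite big_split /= sumrN.
    under eq_bigr do rewrite mulrCA; rewrite sum_delta.
    under eq_bigr do rewrite mulrCA; rewrite sum_delta.
    by case: ifP; rewrite ?mul1r ?mul0r ?subrr.
  apply/eqP; rewrite subr_eq0; apply/eqP.
  have E : forall y, \sum_(b : O | agrO (pred1 i) b a) p b y =
     \sum_(b : O | [forall j, (j != i) ==> (b j == a j)]) p b y.
    by move=> y; apply: eq_bigl => b; rewrite agrO_ns.
  rewrite !E; apply: hNS => j hj; move: hxx'; rewrite /agrI => /forallP /(_ j); by rewrite /= (negbTE hj) => /eqP.
- under eq_bigr do (under eq_bigr do rewrite mulrBl; rewrite big_split /= sumrN).
  rewrite big_split /= sumrN.
  rewrite (_ : \sum_b \sum_z (z == x)%:R * p b z = 1).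
    rewrite (_ : \sum_b \sum_z (z == x')%:R * p b z = 1) ?subrr //.
    by under eq_bigr do rewrite sum_delta; rewrite hN.
  by under eq_bigr do rewrite sum_delta; rewrite hN.
Qed.


Lemma dot_HK_nm p x x' : dot (HK (inr (x, x'))) p = \sum_a p a x - \sum_a p a x'.
Proof.
rewrite dotE /=.
under eq_bigr do (under eq_bigr do rewrite mulrBl; rewrite big_split /= sumrN).
rewrite big_split /= sumrN.
by under eq_bigr do rewrite sum_delta; under [X in _ - X]eq_bigr do rewrite sum_delta.
Qed.

Lemma dot_HK_ns p i x x' a : agrI (pred1 i) x x' ->
  dot (HK (inl (i, (x, x', a)))) p =
  \sum_(b | agrO (pred1 i) b a) p b x - \sum_(b | agrO (pred1 i) b a) p b x'.
Proof.
move=> hxx'; rewrite dotE /= hxx'.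
rewrite -sumrB [RHS]big_mkcond /=; apply: eq_bigr => b _.
under eq_bigr do rewrite -mulrA mulrBl mulrBr.
rewrite big_split /= sumrN.
under eq_bigr do rewrite mulrCA; rewrite sum_delta.
under eq_bigr do rewrite mulrCA; rewrite sum_delta.
by case: ifP; rewrite ?mul1r ?mul0r ?subrr.
Qed.

Lemma dot_HK_ns0 p i x x' a : ~~ agrI (pred1 i) x x' ->
  dot (HK (inl (i, (x, x', a)))) p = 0.
Proof.
move=> /negbTE h; rewrite dotE /= h.
by rewrite big1 // => b _; rewrite big1 // => z _; rewrite mul0r.
Qed.

Definition conep (p : tbl) := (forall a x, 0 <= p a x) /\ (forall k, dot (HK k) p = 0).

Lemma state_conep p : is_state p -> conep p.
Proof. move=> hp; split; [by case: hp | exact: state_cone]. Qed.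

Lemma dot_lin f (y : Kt -> R) p : conep p ->
  dot (fun v => f v - \sum_k y k * HK k v) p = dot f p.
Proof.
move=> [_ hp]; rewrite /dot.
under eq_bigr do rewrite mulrBl; rewrite sumrB.
rewrite (_ : \sum_v (\sum_k y k * HK k v) * p v.1 v.2 = 0) ?subr0 //.
under eq_bigr do rewrite mulr_suml; rewrite exchange_big /=.
rewrite big1 // => k _.
transitivity (y k * dot (HK k) p); last by rewrite hp mulr0.
by rewrite /dot mulr_sumr; apply: eq_bigr => v _; rewrite mulrA.
Qed.

Variable hInp : forall i, (0 < #|Inp i|)%N.
Variable hOut : forall i, (0 < #|Out i|)%N.
Variable hclassical : forall i : 'I_n.+2, (2 <= i)%N -> #|Inp i| = 1%N.

Definition dI : I := [ffun i => enum_val (Ordinal (hInp i))].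
Definition dO : O := [ffun i => enum_val (Ordinal (hOut i))].

Lemma cardO_gt0 : (0 < #|O|)%N.
Proof. by apply/card_gt0P; exists dO. Qed.

Definition uni : tbl := fun a x => (#|O|%:R)^-1.

Lemma uni_gt0 a x : 0 < uni a x.
Proof. by rewrite /uni invr_gt0 ltr0n cardO_gt0. Qed.

Lemma uni_state : is_state uni.
Proof.
split.
- by move=> a x; apply: ltW; apply: uni_gt0.
- move=> x; rewrite /uni sumr_const -[_ *+ _]mulr_natl mulfV //.
  by rewrite pnatr_eq0 -lt0n cardO_gt0.
- by [].
Qed.

Lemma cone_cases p : conep p ->
  (forall a x, p a x = 0) \/
  exists s, 0 < s /\ is_state (fun a x => p a x / s).
Proof.
move=> [hp0 hpk].
have hnm : forall x, \sum_a p a x = \sum_a p a dI.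
  by move=> x; apply/eqP; rewrite -subr_eq0 -dot_HK_nm hpk.
set s := \sum_a p a dI.
have s0 : 0 <= s by apply: sumr_ge0.
case: (s =P 0) => hs.
  left => a x; move: (hnm x); rewrite -/s hs => /eqP.
  rewrite psumr_eq0 => [/allP /(_ a) /(_ (mem_index_enum a)) /eqP //|b _].
  exact: hp0.
right; have sp : 0 < s by rewrite lt0r s0 andbT; apply/eqP.
exists s; split => //; split.
- by move=> a x; apply: divr_ge0 => //; apply: ltW.
- by move=> x; rewrite -mulr_suml hnm -/s mulfV //; apply/eqP.
- move=> i x x' a hxx'.
  rewrite -!mulr_suml; congr (_ * _); apply/eqP; rewrite -subr_eq0.
  have E : forall y, \sum_(b : O | [forall j, (j != i) ==> (b j == a j)]) p b y =
     \sum_(b : O | agrO (pred1 i) b a) p b y.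
    by move=> y; apply: eq_bigl => b; rewrite agrO_ns.
  rewrite !E -dot_HK_ns ?hpk //.
  apply/forallP => j /=; case: (j =P i) => //= /eqP hj; apply/eqP; exact: hxx'.
Qed.

Lemma dot_scale f p s : dot f (fun a x => p a x / s) = dot f p / s.
Proof. by rewrite /dot mulr_suml; apply: eq_bigr => v _; rewrite mulrA. Qed.

Lemma dot0 f p : (forall a x, p a x = 0) -> dot f p = 0.
Proof. by move=> h; rewrite /dot big1 // => v _; rewrite h mulr0. Qed.

Lemma nonneg_rep f : (forall p, is_state p -> 0 <= dot f p) ->
  exists y : Kt -> R, forall v, 0 <= f v - \sum_k y k * HK k v.
Proof.
move=> hf; apply: farkas => p hp0 hpk.
pose pt : tbl := fun a x => p (a, x).
have cp : conep pt.
  split; first by move=> a x; exact: hp0.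
  by move=> k; rewrite -(hpk k) /dot; apply: eq_bigr => -[a x] _.
have -> : \sum_v f v * p v = dot f pt by apply: eq_bigr => -[a x].
case: (cone_cases cp) => [h|[s [sp hs]]]; first by rewrite dot0.
have := hf _ hs; rewrite dot_scale => h.
by have := mulr_ge0 h (ltW sp); rewrite divfK ?gt_eqF.
Qed.


Lemma dot_uni0 z : (forall v, 0 <= z v) -> dot z uni = 0 -> forall v, z v = 0.
Proof.
move=> hz h v; move/eqP: h; rewrite psumr_eq0 => [/allP /(_ v (mem_index_enum v))|w _].
  by rewrite mulf_eq0 (gt_eqF (uni_gt0 _ _)) orbF => /eqP.
by apply: mulr_ge0 => //; apply: ltW; apply: uni_gt0.
Qed.

Lemma zero_rep g : (forall p, is_state p -> dot g p = 0) ->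
  exists y : Kt -> R, forall v, g v = \sum_k y k * HK k v.
Proof.
move=> hg; have [y hy] : exists y : Kt -> R, forall v, 0 <= g v - \sum_k y k * HK k v.
  by apply: nonneg_rep => p hp; rewrite hg.
exists y => v; apply/eqP; rewrite -subr_eq0; apply/eqP; move: v.
apply: dot_uni0 => //; rewrite dot_lin ?hg //; [exact: uni_state | exact: state_conep uni_state].
Qed.


Definition o0 : 'I_n.+2 := ord0.
Definition o1 : 'I_n.+2 := lift ord0 ord0.

Lemma agrI_single i (x x' : I) : #|Inp i| = 1%N -> agrI (pred1 i) x x' -> x = x'.
Proof.
move=> h1 /forallP h; apply/ffunP => j.
case: (eqVneq j i) => [->|hj].
  have /card_le1_eqP hc : (#|Inp i| <= 1)%N by rewrite h1.
  exact: hc.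
by move: (h j); rewrite /= (negbTE hj) => /eqP.
Qed.

Lemma sum_pred_delta (P : pred I) (x : I) :
  \sum_(z | P z) (z == x)%:R = (P x)%:R :> R.
Proof.
rewrite big_mkcond (bigD1 x) //= eqxx big1 ?addr0; first by case: (P x).
by move=> z /negbTE ->; case: (P z).
Qed.

Section Struct.
Variable y : Kt -> R.

Definition Tz (z : I) : R := (z == dI)%:R +
  \sum_(xx : I * I) y (inr xx) * ((z == xx.1)%:R - (z == xx.2)%:R).
Definition alp i (b : O) (z : I) : R :=
  \sum_(t : I * I * O) y (inl (i, t)) * HK (inl (i, t)) (b, z).

Lemma c_decomp b z :
  (z == dI)%:R + \sum_k y k * HK k (b, z) = Tz z + \sum_i alp i b z.
Proof.
have E1 : \sum_(i : 'I_n.+2 * (I * I * O)) y (inl i) * HK (inl i) (b, z) =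
   \sum_i \sum_t y (inl (i, t)) * HK (inl (i, t)) (b, z).
  by rewrite pair_bigA; apply: eq_bigr => -[].
have E2 : \sum_(xx : I * I) y (inr xx) * HK (inr xx) (b, z) =
   \sum_(xx : I * I) y (inr xx) * ((z == xx.1)%:R - (z == xx.2)%:R).
  by apply: eq_bigr => -[].
have E0 : \sum_k y k * HK k (b, z) = \sum_(i : 'I_n.+2 * (I * I * O)) y (inl i) * HK (inl i) (b, z)
  + \sum_(xx : I * I) y (inr xx) * HK (inr xx) (b, z) by rewrite big_sumType.
rewrite E0 E1 E2 /Tz /alp; ring.
Qed.

Lemma alp_classical (i : 'I_n.+2) b z : (2 <= i)%N -> alp i b z = 0.
Proof.
move=> hi; rewrite /alp big1 // => -[[x x'] a] _ /=.
case: ifP => [h|_]; last by rewrite mulr0.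
by rewrite (agrI_single (hclassical hi) h) subrr !mulr0.
Qed.

Lemma alp_inv i b b' z : agrO (pred1 i) b b' -> alp i b z = alp i b' z.
Proof.
move=> hb; rewrite /alp; apply: eq_bigr => -[[x x'] a] _ /=.
case: ifP => // _; congr (_ * (_ * _)).
have -> : agrO (pred1 i) b a = agrO (pred1 i) b' a => //.
apply/idP/idP => h.
  by apply: agrO_trans h; rewrite agrO_sym.
exact: agrO_trans h.
Qed.

Lemma alp_sum0 i b z : \sum_(z' | agrI (pred1 i) z' z) alp i b z' = 0.
Proof.
rewrite /alp exchange_big /= big1 // => -[[x x'] a] _ /=.
rewrite -mulr_sumr; case hx: (agrI (pred1 i) x x'); last first.
  by rewrite big1 ?mulr0 // => z' _; rewrite mulr0.
rewrite (_ : \sum_(i0 | agrI (pred1 i) i0 z) _ = 0) ?mulr0 //.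
rewrite (eq_bigr (fun z' => (if agrO (pred1 i) b a then 1 else 0) *
   ((z' == x)%:R - (z' == x')%:R))) //.
rewrite -mulr_sumr sumrB !sum_pred_delta.
suff -> : agrI (pred1 i) x z = agrI (pred1 i) x' z by rewrite subrr mulr0.
apply/idP/idP => h.
  by apply: agrI_trans h; rewrite agrI_sym.
exact: agrI_trans h.
Qed.

Lemma sum_alp b z : \sum_i alp i b z = alp o0 b z + alp o1 b z.
Proof.
rewrite big_ord_recl big_ord_recl /= big1 ?addr0 ?addrA //.
move=> i _; apply: alp_classical.
by rewrite /= /bump /=.
Qed.

End Struct.


Definition P01 : pred 'I_n.+2 := fun j => (j == o0) || (j == o1).

Lemma agr1_01 b b' : agrO (pred1 o1) b b' -> agrO P01 b b'.
Proof. by apply: agrO_mono => j /eqP ->; rewrite /P01 eqxx orbT. Qed.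
Lemma agr0_01 b b' : agrO (pred1 o0) b b' -> agrO P01 b b'.
Proof. by apply: agrO_mono => j /eqP ->; rewrite /P01 eqxx. Qed.

Definition mixO (b b' : O) : O := [ffun j => if j == o1 then b j else b' j].

Section Decomp.
Variables (alA alB : O -> I -> R).
Hypothesis hA1 : forall b b' z, agrO (pred1 o1) b b' -> alA b z = alA b' z.
Hypothesis hB0 : forall b b' z, agrO (pred1 o0) b b' -> alB b z = alB b' z.
Hypothesis hc : forall b z, 0 <= alA b z + alB b z.
Hypothesis hSA : forall b b' z, \sum_(z' | agrI (pred1 o1) z' z) alA b z' =
                              \sum_(z' | agrI (pred1 o1) z' z) alA b' z'.
Hypothesis hSB : forall b b' z, \sum_(z' | agrI (pred1 o0) z' z) alB b z' =
                              \sum_(z' | agrI (pred1 o0) z' z) alB b' z'.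

Definition mm b z := \big[Order.min/alA b z]_(b' | agrO P01 b' b) alA b' z.

Lemma mm_le b z : mm b z <= alA b z.
Proof. exact: bigmin_le_id. Qed.

Lemma mm_le1 b b' z : agrO P01 b' b -> mm b z <= alA b' z.
Proof. by move=> h; apply: bigmin_le_cond. Qed.

Lemma mm_inv_le b b' z : agrO P01 b b' -> mm b' z <= mm b z.
Proof.
move=> h; apply: le_bigmin; first exact: mm_le1.
by move=> b'' h''; apply: mm_le1; apply: agrO_trans h'' h.
Qed.

Lemma mm_inv b b' z : agrO P01 b b' -> mm b z = mm b' z.
Proof.
move=> h; apply/le_anti; rewrite !mm_inv_le //; by rewrite agrO_sym.
Qed.

Lemma mm_lb b z : - alB b z <= mm b z.
Proof.
apply: le_bigmin; first by rewrite -subr_ge0 opprK; exact: hc.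
move=> b' h.
have h1 : agrO (pred1 o1) (mixO b b') b'.
  apply/forallP => j; rewrite /mixO ffunE /=; case: (j =P o1) => //= _.
have h0 : agrO (pred1 o0) (mixO b b') b.
  apply/forallP => j; rewrite /mixO ffunE /=; case: (j =P o0) => //= hj0.
  case: (j =P o1) => [_|hj1]; first exact: eqxx.
  move/forallP: h => /(_ j); rewrite /P01.
  by case: (j =P o0) => //; case: (j =P o1).
rewrite -(hA1 _ h1) -(hB0 _ h0) -subr_ge0 opprK; exact: hc.
Qed.

Definition wA b z := alA b z - mm b z.
Definition wB b z := alB b z + mm b z.

Lemma wA_ge0 b z : 0 <= wA b z.
Proof. by rewrite subr_ge0 mm_le. Qed.
Lemma wB_ge0 b z : 0 <= wB b z.
Proof. rewrite /wB addrC -(opprK (alB b z)) subr_ge0; exact: mm_lb. Qed.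
Lemma wAB b z : wA b z + wB b z = alA b z + alB b z.
Proof. rewrite /wA /wB; ring. Qed.
Lemma wA_inv b b' z : agrO (pred1 o1) b b' -> wA b z = wA b' z.
Proof. by move=> h; rewrite /wA (hA1 _ h) (mm_inv _ (agr1_01 h)). Qed.
Lemma wB_inv b b' z : agrO (pred1 o0) b b' -> wB b z = wB b' z.
Proof. by move=> h; rewrite /wB (hB0 _ h) (mm_inv _ (agr0_01 h)). Qed.
Lemma SA_inv b b' z : agrO P01 b b' ->
  \sum_(z' | agrI (pred1 o1) z' z) wA b z' = \sum_(z' | agrI (pred1 o1) z' z) wA b' z'.
Proof.
move=> h; rewrite /wA !sumrB (hSA b b'); congr (_ - _).
by apply: eq_bigr => z' _; rewrite (mm_inv _ h).
Qed.
Lemma SB_inv b b' z : agrO P01 b b' ->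
  \sum_(z' | agrI (pred1 o0) z' z) wB b z' = \sum_(z' | agrI (pred1 o0) z' z) wB b' z'.
Proof.
move=> h; rewrite /wB !big_split /= (hSB b b'); congr (_ + _).
by apply: eq_bigr => z' _; rewrite (mm_inv _ h).
Qed.
End Decomp.


Definition mixI1 (z z' : I) : I := [ffun j => if j == o1 then z' j else z j].
Definition mixI0 (z z' : I) : I := [ffun j => if j == o0 then z' j else z j].
Definition rep01 (a : O) : O := [ffun j => if P01 j then dO j else a j].
Definition rep1 (a : O) : O := [ffun j => if j == o1 then dO j else a j].
Definition rep0 (a : O) : O := [ffun j => if j == o0 then dO j else a j].
Definition updI (z : I) i : I := [ffun j => if j == i then dI j else z j].

Lemma Reg i (F : I -> R) :
  \sum_(z : I | z i == dI i) \sum_(z' | agrI (pred1 i) z' z) F z' = \sum_z' F z'.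
Proof.
transitivity (\sum_(z : I) \sum_(z' : I)
   (if (z i == dI i) && agrI (pred1 i) z' z then F z' else 0)).
  rewrite big_mkcond; apply: eq_bigr => z _; case: ifP => h /=.
    by rewrite big_mkcond.
  by rewrite big1.
rewrite exchange_big /=; apply: eq_bigr => z' _.
rewrite (bigD1 (updI z' i)) //= big1 ?addr0.
  have -> : agrI (pred1 i) z' (updI z' i).
    apply/forallP => j; rewrite ffunE /=; case: (j =P i) => //= _; exact: eqxx.
  by rewrite ffunE eqxx eqxx.
move=> z hz; case: ifP => // /andP [/eqP hzi /forallP hag].
case/eqP: hz; apply/ffunP => j; rewrite /updI ffunE.
case: (eqVneq j i) => [->|hj]; first by rewrite hzi.
by move: (hag j); rewrite /= (negbTE hj) => /eqP.
Qed.

Lemma mixI1_agr z z' : agrI (pred1 o1) z' z -> mixI1 z z' = z'.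
Proof.
move=> /forallP h; apply/ffunP => j; rewrite ffunE.
case: (eqVneq j o1) => [->//|hj].
by move: (h j); rewrite /= (negbTE hj) => /eqP.
Qed.
Lemma mixI0_agr z z' : agrI (pred1 o0) z' z -> mixI0 z z' = z'.
Proof.
move=> /forallP h; apply/ffunP => j; rewrite ffunE.
case: (eqVneq j o0) => [->//|hj].
by move: (h j); rewrite /= (negbTE hj) => /eqP.
Qed.

Lemma rep01_agr a : agrO P01 (rep01 a) a.
Proof. apply/forallP => j; rewrite ffunE; case: (P01 j) => //=; exact: eqxx. Qed.
Lemma rep1_agr a : agrO (pred1 o1) (rep1 a) a.
Proof. apply/forallP => j; rewrite ffunE /=; case: (j == o1) => //=; exact: eqxx. Qed.
Lemma rep0_agr a : agrO (pred1 o0) (rep0 a) a.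
Proof. apply/forallP => j; rewrite ffunE /=; case: (j == o0) => //=; exact: eqxx. Qed.


Lemma sum_pair (A B : finType) (F : A * B -> R) :
  \sum_(p : A * B) F p = \sum_a \sum_b F (a, b).
Proof. by rewrite pair_bigA; apply: eq_bigr => -[]. Qed.

Lemma part i (w S : O -> I -> R) (K : O -> I -> I -> R) (mix : I -> I -> I)
    (b : O) (x : I) :
  (forall z z', S b z * K b z z' = if agrI (pred1 i) z' z then w b z' else 0) ->
  (forall z z', agrI (pred1 i) z' z -> mix z z' = z') ->
  \sum_(z : I) (if z i == dI i then S b z else 0) *
     \sum_z' K b z z' * (x == mix z z')%:R = w b x.
Proof.
move=> hSK hmix.
transitivity (\sum_(z : I | z i == dI i) \sum_(z' | agrI (pred1 i) z' z)
                 w b z' * (x == z')%:R).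
  rewrite [RHS]big_mkcond; apply: eq_bigr => z _; case: ifP => _; last by rewrite mul0r.
  rewrite mulr_sumr [RHS]big_mkcond; apply: eq_bigr => z' _.
  rewrite mulrA hSK; case: ifP => h; last by rewrite mul0r.
  by rewrite hmix.
rewrite Reg.
rewrite (bigD1 x) //= eqxx mulr1 big1 ?addr0 // => z' /negbTE.
by rewrite eq_sym => ->; rewrite mulr0.
Qed.

Section Mix.
Variables (Rt : finType) (M : Rt -> tbl -> R) (wA wB : O -> I -> R)
  (Rr : Rt -> O -> I -> R) (r0 : Rt).
Hypothesis wA0 : forall b z, 0 <= wA b z.
Hypothesis wB0 : forall b z, 0 <= wB b z.
Hypothesis wAi : forall b b' z, agrO (pred1 o1) b b' -> wA b z = wA b' z.
Hypothesis wBi : forall b b' z, agrO (pred1 o0) b b' -> wB b z = wB b' z.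
Hypothesis SAi : forall b b' z, agrO P01 b b' ->
  \sum_(z' | agrI (pred1 o1) z' z) wA b z' = \sum_(z' | agrI (pred1 o1) z' z) wA b' z'.
Hypothesis SBi : forall b b' z, agrO P01 b b' ->
  \sum_(z' | agrI (pred1 o0) z' z) wB b z' = \sum_(z' | agrI (pred1 o0) z' z) wB b' z'.
Hypothesis norm : forall b, \sum_z (wA b z + wB b z) = 1.
Hypothesis Rr0 : forall r a x, 0 <= Rr r a x.
Hypothesis Rsum : forall a x, \sum_r Rr r a x = wA a x + wB a x.

Definition SA b z := \sum_(z' | agrI (pred1 o1) z' z) wA b z'.
Definition SB b z := \sum_(z' | agrI (pred1 o0) z' z) wB b z'.
Definition wT b (t : I + I) : R :=
  match t with
  | inl z => if z o1 == dI o1 then SA b z else 0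
  | inr z => if z o0 == dI o0 then SB b z else 0
  end.
Definition KA b z z' : R := if SA b z == 0 then (z' == z)%:R
  else if agrI (pred1 o1) z' z then wA b z' / SA b z else 0.
Definition KB b z z' : R := if SB b z == 0 then (z' == z)%:R
  else if agrI (pred1 o0) z' z then wB b z' / SB b z else 0.
Definition cc a x := wA a x + wB a x.
Definition pi a x r : R := if cc a x == 0 then (r == r0)%:R else Rr r a x / cc a x.

Lemma sum_cond_div (P : pred I) (w : I -> R) s : s != 0 -> \sum_(z | P z) w z = s ->
  \sum_z (if P z then w z / s else 0) = 1.
Proof.
move=> hs hsum; rewrite -big_mkcond /= -mulr_suml hsum mulfV //.
Qed.

Lemma sum_delta1 (z : I) : \sum_z' (z' == z)%:R = 1 :> R.
Proof. by rewrite (sum_pred_delta predT z). Qed.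

Lemma KA_sum b z : \sum_z' KA b z z' = 1.
Proof.
rewrite /KA; case: (eqVneq (SA b z) 0) => h; first exact: sum_delta1.
exact: sum_cond_div.
Qed.
Lemma KB_sum b z : \sum_z' KB b z z' = 1.
Proof.
rewrite /KB; case: (eqVneq (SB b z) 0) => h; first exact: sum_delta1.
exact: sum_cond_div.
Qed.

Lemma SA_ge0 b z : 0 <= SA b z. Proof. by apply: sumr_ge0. Qed.
Lemma SB_ge0 b z : 0 <= SB b z. Proof. by apply: sumr_ge0. Qed.

Lemma KA_ge0 b z z' : 0 <= KA b z z'.
Proof.
rewrite /KA; case: ifP => _; first by case: (_ == _).
case: ifP => _ //; apply: divr_ge0 => //; exact: SA_ge0.
Qed.
Lemma KB_ge0 b z z' : 0 <= KB b z z'.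
Proof.
rewrite /KB; case: ifP => _; first by case: (_ == _).
case: ifP => _ //; apply: divr_ge0 => //; exact: SB_ge0.
Qed.

Lemma wT_ge0 b t : 0 <= wT b t.
Proof. case: t => z /=; case: ifP => _ //; [exact: SA_ge0 | exact: SB_ge0]. Qed.

Lemma wT_sum b : \sum_t wT b t = 1.
Proof.
transitivity (\sum_z wT b (inl z) + \sum_z wT b (inr z)).
  exact: (big_sumType _ predT (wT b)).
have -> : \sum_z wT b (inl z) = \sum_(z : I | z o1 == dI o1) SA b z by rewrite [RHS]big_mkcond.
have -> : \sum_z wT b (inr z) = \sum_(z : I | z o0 == dI o0) SB b z by rewrite [RHS]big_mkcond.
by rewrite /SA /SB !Reg -big_split norm.
Qed.

Lemma cc_ge0 a x : 0 <= cc a x. Proof. by apply: addr_ge0. Qed.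

Lemma Rr_le a x r : Rr r a x <= cc a x.
Proof.
rewrite /cc -Rsum (bigD1 r) //= lerDl; apply: sumr_ge0 => r' _; exact: Rr0.
Qed.

Lemma pi_ge0 a x r : 0 <= pi a x r.
Proof.
rewrite /pi; case: ifP => _; first by case: (_ == _).
apply: divr_ge0 => //; exact: cc_ge0.
Qed.

Lemma pi_sum a x : \sum_r pi a x r = 1.
Proof.
rewrite /pi; case: (eqVneq (cc a x) 0) => h.
  rewrite (bigD1 r0) //= eqxx big1 ?addr0 // => r /negbTE -> //.
by rewrite -mulr_suml Rsum mulfV.
Qed.

Lemma cc_pi a x r : cc a x * pi a x r = Rr r a x.
Proof.
rewrite /pi; case: ifP => [/eqP h|/negbT h]; last by rewrite mulrC divfK.
rewrite h mul0r; apply/eqP; rewrite eq_le Rr0 /= -h; exact: Rr_le.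
Qed.

Lemma SK_A b z z' : SA b z * KA b z z' = if agrI (pred1 o1) z' z then wA b z' else 0.
Proof.
rewrite /KA; case: ifP => [/eqP h|/negbT h]; last first.
  by case: ifP => _; rewrite ?mulr0 // mulrC divfK.
rewrite h mul0r; case: ifP => // hz; apply/esym/eqP.
move/eqP: h; rewrite /SA psumr_eq0 => [/allP|w _]; last exact: wA0.
move=> /(_ z' (mem_index_enum _)); by rewrite hz.
Qed.
Lemma SK_B b z z' : SB b z * KB b z z' = if agrI (pred1 o0) z' z then wB b z' else 0.
Proof.
rewrite /KB; case: ifP => [/eqP h|/negbT h]; last first.
  by case: ifP => _; rewrite ?mulr0 // mulrC divfK.
rewrite h mul0r; case: ifP => // hz; apply/esym/eqP.
move/eqP: h; rewrite /SB psumr_eq0 => [/allP|w _]; last exact: wB0.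
move=> /(_ z' (mem_index_enum _)); by rewrite hz.
Qed.


Definition Jt := ((({ffun O -> I + I} * {ffun O -> {ffun I -> I}}) *
   {ffun O -> {ffun I -> I}}) * {ffun O -> {ffun I -> Rt}})%type.

Definition gT (T : {ffun O -> I + I}) (F G : {ffun O -> {ffun I -> I}}) (a : O) : I :=
  match T (rep01 a) with
  | inl z => mixI1 z (F (rep1 a) z)
  | inr z => mixI0 z (G (rep0 a) z)
  end.
Definition gJ (j : Jt) := gT j.1.1.1 j.1.1.2 j.1.2.

Definition wTp (T : {ffun O -> I + I}) := \prod_a wT a (T a).
Definition wFp (F : {ffun O -> {ffun I -> I}}) := \prod_a \prod_z KA a z (F a z).
Definition wGp (G : {ffun O -> {ffun I -> I}}) := \prod_a \prod_z KB a z (G a z).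
Definition wPs (P : {ffun O -> {ffun I -> Rt}}) := \prod_a \prod_x pi a x (P a x).
Definition qJ (j : Jt) := wTp j.1.1.1 * wFp j.1.1.2 * wGp j.1.2 * wPs j.2.
Definition BJ (j : Jt) (r : Rt) (p : tbl) : R :=
  \sum_a \sum_x p a x * (if (j.2 a (gJ j a) == r) && (x == gJ j a) then 1 else 0).

Lemma wF_sum : forall a, \sum_(phi : {ffun I -> I}) \prod_z KA a z (phi z) = 1.
Proof. by move=> a; apply: ML1 => z; apply: KA_sum. Qed.
Lemma wG_sum : forall a, \sum_(phi : {ffun I -> I}) \prod_z KB a z (phi z) = 1.
Proof. by move=> a; apply: ML1 => z; apply: KB_sum. Qed.
Lemma wP_sum : forall a, \sum_(phi : {ffun I -> Rt}) \prod_x pi a x (phi x) = 1.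
Proof. by move=> a; apply: ML1 => x; apply: pi_sum. Qed.

Lemma qJ_ge0 j : 0 <= qJ j.
Proof.
rewrite /qJ /wTp /wFp /wGp /wPs.
repeat apply: mulr_ge0; apply: prodr_ge0 => a _; try apply: prodr_ge0 => z _.
- exact: wT_ge0.
- exact: KA_ge0.
- exact: KB_ge0.
- exact: pi_ge0.
Qed.

Lemma qJ_sum : \sum_j qJ j = 1.
Proof.
rewrite sum_pair.
under eq_bigr do rewrite /qJ /= -mulr_sumr (ML1 wP_sum) mulr1.
rewrite sum_pair.
under eq_bigr do rewrite /= -mulr_sumr (ML1 wG_sum) mulr1.
rewrite sum_pair.
under eq_bigr do rewrite /= -mulr_sumr (ML1 wF_sum) mulr1.
exact: (ML1 wT_sum).
Qed.


Lemma P_marg a x r (g : I) :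
  \sum_(P : {ffun O -> {ffun I -> Rt}}) wPs P * (if (P a g == r) && (x == g) then 1 else 0)
  = (x == g)%:R * pi a x r.
Proof.
case: (eqVneq x g) => [<-|hne]; last first.
  by rewrite mul0r big1 // => P _; rewrite andbF mulr0.
rewrite mul1r.
under eq_bigr do rewrite andbT.
rewrite /wPs (@ML _ _ _ (fun a' (psi : {ffun I -> Rt}) => \prod_x' pi a' x' (psi x'))
   (fun psi : {ffun I -> Rt} => if psi x == r then 1 else 0) a wP_sum).
rewrite (@ML _ _ _ (fun x' r' => pi a x' r') (fun r' => if r' == r then 1 else 0) x (pi_sum a)).
rewrite (bigD1 r) //= eqxx mulr1 big1 ?addr0 // => r' /negbTE ->; by rewrite mulr0.
Qed.

Definition HA a x z := \sum_z' KA (rep1 a) z z' * (x == mixI1 z z')%:R.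
Definition HB a x z := \sum_z' KB (rep0 a) z z' * (x == mixI0 z z')%:R.
Definition HT a x (t : I + I) := match t with inl z => HA a x z | inr z => HB a x z end.

Lemma FG_marg a x T :
  \sum_(F : {ffun O -> {ffun I -> I}}) \sum_(G : {ffun O -> {ffun I -> I}})
     wTp T * wFp F * wGp G * (x == gT T F G a)%:R = wTp T * HT a x (T (rep01 a)).
Proof.
rewrite /gT; case: (T (rep01 a)) => z /=.
- transitivity (\sum_(F : {ffun O -> {ffun I -> I}})
     wTp T * (wFp F * (x == mixI1 z (F (rep1 a) z))%:R)).
    apply: eq_bigr => F _.
    rewrite (eq_bigr (fun G => (wTp T * wFp F * (x == mixI1 z (F (rep1 a) z))%:R) * wGp G));
      last by move=> G _; rewrite mulrAC.
    by rewrite -mulr_sumr /wGp (ML1 wG_sum) mulr1 mulrA.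
  rewrite -mulr_sumr; congr (_ * _).
  rewrite /wFp (@ML _ _ _ (fun a' (phi : {ffun I -> I}) => \prod_z'' KA a' z'' (phi z''))
     (fun phi : {ffun I -> I} => (x == mixI1 z (phi z))%:R) (rep1 a) wF_sum).
  by rewrite (@ML _ _ _ (fun z'' z' => KA (rep1 a) z'' z') (fun z' => (x == mixI1 z z')%:R) z
     (KA_sum (rep1 a))).
- transitivity (\sum_(F : {ffun O -> {ffun I -> I}})
     wTp T * wFp F * (\sum_(G : {ffun O -> {ffun I -> I}}) wGp G * (x == mixI0 z (G (rep0 a) z))%:R)).
    apply: eq_bigr => F _; rewrite mulr_sumr; apply: eq_bigr => G _; by rewrite !mulrA.
  rewrite -mulr_suml -mulr_sumr /wFp (ML1 wF_sum) mulr1; congr (_ * _).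
  rewrite /wGp (@ML _ _ _ (fun a' (phi : {ffun I -> I}) => \prod_z'' KB a' z'' (phi z''))
     (fun phi : {ffun I -> I} => (x == mixI0 z (phi z))%:R) (rep0 a) wG_sum).
  by rewrite (@ML _ _ _ (fun z'' z' => KB (rep0 a) z'' z') (fun z' => (x == mixI0 z z')%:R) z
     (KB_sum (rep0 a))).
Qed.


Lemma rep01_rep1 a : agrO P01 (rep01 a) (rep1 a).
Proof. apply: agrO_trans (rep01_agr a) _; rewrite agrO_sym; apply: agr1_01; exact: rep1_agr. Qed.
Lemma rep01_rep0 a : agrO P01 (rep01 a) (rep0 a).
Proof. apply: agrO_trans (rep01_agr a) _; rewrite agrO_sym; apply: agr0_01; exact: rep0_agr. Qed.

Lemma claimC a x :
  \sum_(j1 : ({ffun O -> I + I} * {ffun O -> {ffun I -> I}}) * {ffun O -> {ffun I -> I}})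
     wTp j1.1.1 * wFp j1.1.2 * wGp j1.2 * (x == gT j1.1.1 j1.1.2 j1.2 a)%:R = cc a x.
Proof.
rewrite sum_pair sum_pair.
transitivity (\sum_(T : {ffun O -> I + I}) wTp T * HT a x (T (rep01 a))).
  by apply: eq_bigr => T _; rewrite -FG_marg.
rewrite /wTp (@ML _ _ _ wT (HT a x) (rep01 a) wT_sum).
transitivity (\sum_z wT (rep01 a) (inl z) * HT a x (inl z) +
              \sum_z wT (rep01 a) (inr z) * HT a x (inr z)).
  exact: (big_sumType _ predT (fun t => wT (rep01 a) t * HT a x t)).
rewrite /cc; congr (_ + _).
- rewrite -(wAi x (rep1_agr a)).
  rewrite -(@part o1 wA (SA) KA mixI1 (rep1 a) x (SK_A (rep1 a)) (@mixI1_agr)).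
  apply: eq_bigr => z _ /=; congr (_ * _).
  by rewrite /SA (SAi z (rep01_rep1 a)).
- rewrite -(wBi x (rep0_agr a)).
  rewrite -(@part o0 wB (SB) KB mixI0 (rep0 a) x (SK_B (rep0 a)) (@mixI0_agr)).
  apply: eq_bigr => z _ /=; congr (_ * _).
  by rewrite /SB (SBi z (rep01_rep0 a)).
Qed.

Lemma qJ_ind a x r :
  \sum_j qJ j * (if (j.2 a (gJ j a) == r) && (x == gJ j a) then 1 else 0) = Rr r a x.
Proof.
rewrite sum_pair -cc_pi -claimC mulr_suml; apply: eq_bigr => j1 _.
rewrite /qJ /gJ /=.
under eq_bigr do rewrite -mulrA.
rewrite -mulr_sumr P_marg; by rewrite mulrA.
Qed.

Lemma BJ_mix r p : is_state p -> M r p = \sum_a \sum_x p a x * Rr r a x ->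
  M r p = \sum_j qJ j * BJ j r p.
Proof.
move=> _ ->; rewrite /BJ.
under [RHS]eq_bigr do rewrite mulr_sumr; rewrite [RHS]exchange_big /=.
apply: eq_bigr => a _.
under [RHS]eq_bigr do rewrite mulr_sumr; rewrite [RHS]exchange_big /=.
apply: eq_bigr => x _.
rewrite -(qJ_ind a x r) mulr_sumr; apply: eq_bigr => j _; by rewrite mulrCA.
Qed.

End Mix.


Section Adapt.
Variables (T : {ffun O -> I + I}) (F G : {ffun O -> {ffun I -> I}}).
Local Notation g := (gT T F G).

Lemma adapt_mono S C : adapt g S C -> forall C' : pred O, (forall a, C' a -> C a) -> adapt g S C'.
Proof.
elim=> [C0|S0 C0 i xi hi hg _ IH] C' hC'.
  exact: adapt_done.
apply: (@adapt_step _ _ _ g S0 C' i xi hi).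
  by move=> a /hC' /hg.
move=> ai; apply: (IH ai) => a /andP [/hC' h1 h2]; by rewrite h1 h2.
Qed.

Lemma adapt_empty k : forall (S : {set 'I_n.+2}) (C : pred O), #|S| = k -> (forall a, ~~ C a) -> adapt g S C.
Proof.
elim: k => [|k IH] S C hS hC.
  move/eqP: hS; rewrite cards_eq0 => /eqP ->; exact: adapt_done.
have : (0 < #|S|)%N by rewrite hS.
case/card_gt0P => i hi.
apply: (@adapt_step _ _ _ g S C i (dI i) hi).
  by move=> a; rewrite (negbTE (hC a)).
move=> ai; apply: IH.
  by move: hS; rewrite (cardsD1 i) hi => -[].
by move=> a; rewrite (negbTE (hC a)).
Qed.

Lemma rep01_eq a a' : agrO P01 a a' -> rep01 a = rep01 a'.
Proof.
move=> /forallP h; apply/ffunP => j; rewrite !ffunE.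
case hj: (P01 j) => //; move: (h j); by rewrite hj => /eqP.
Qed.
Lemma rep1_eq a a' : agrO (pred1 o1) a a' -> rep1 a = rep1 a'.
Proof.
move=> /forallP h; apply/ffunP => j; rewrite !ffunE.
case hj: (j == o1) => //; move: (h j); by rewrite /= hj => /eqP.
Qed.
Lemma rep0_eq a a' : agrO (pred1 o0) a a' -> rep0 a = rep0 a'.
Proof.
move=> /forallP h; apply/ffunP => j; rewrite !ffunE.
case hj: (j == o0) => //; move: (h j); by rewrite /= hj => /eqP.
Qed.

Lemma o01 : (o0 == o1) = false. Proof. by []. Qed.
Lemma o10 : (o1 == o0) = false. Proof. by []. Qed.

Lemma set1D (x : 'I_n.+2) : [set x] :\ x = set0.
Proof. by apply/setP => j; rewrite !inE; case: (j == x). Qed.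
Lemma set2D0 : [set o0; o1] :\ o0 = [set o1].
Proof. apply/setP => j; rewrite !inE; case: (eqVneq j o0) => [->|h] /=; by rewrite ?o01. Qed.
Lemma set2D1 : [set o0; o1] :\ o1 = [set o0].
Proof. apply/setP => j; rewrite !inE; case: (eqVneq j o1) => [->|h] /=; by rewrite ?o10 ?orbF. Qed.


Lemma agr_fix (P : pred 'I_n.+2) i (ai : Out i) a a' :
  agrO P a a' -> a i == ai -> a' i == ai -> agrO (fun j => P j && (j != i)) a a'.
Proof.
move=> /forallP h h1 h2; apply/forallP => j.
case: (eqVneq j i) => [->|hj]; first by rewrite (eqP h1) (eqP h2) eqxx orbT.
rewrite /= andbT; exact: h.
Qed.

Lemma adapt_final (C : pred O) : (forall a a', C a -> C a' -> agrO P01 a a') ->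
  adapt g [set o0; o1] C.
Proof.
move=> hC; case: (pickP C) => [a0 Ca0|hnone]; last first.
  apply: (@adapt_empty #|[set o0; o1]|) => // a; by rewrite hnone.
have hrep : forall a, C a -> rep01 a = rep01 a0 by move=> a Ca; apply: rep01_eq; exact: hC.
case E : (T (rep01 a0)) => [z|z].
- apply: (@adapt_step _ _ _ g _ C o0 (z o0)); first by rewrite !inE eqxx.
    by move=> a Ca; rewrite /gT (hrep a Ca) E /mixI1 ffunE o01.
  move=> ai; rewrite set2D0.
  case: (pickP (fun a => C a && (a o0 == ai))) => [a1 /andP [Ca1 h1]|hn]; last first.
    apply: (@adapt_empty #|[set o1]|) => // a; by rewrite hn.
  apply: (@adapt_step _ _ _ g _ _ o1 (F (rep1 a1) z o1)); first by rewrite !inE eqxx.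
    move=> a /andP [Ca h]; rewrite /gT (hrep a Ca) E /mixI1 ffunE eqxx.
    have -> // : rep1 a = rep1 a1; apply: rep1_eq.
    have := agr_fix (hC a a1 Ca Ca1) h h1.
    apply: agrO_mono => j /andP []; rewrite /P01; case: (j =P o0) => //= _ -> _; done.
  move=> ai'; rewrite set1D; exact: adapt_done.
- apply: (@adapt_step _ _ _ g _ C o1 (z o1)); first by rewrite !inE eqxx orbT.
    by move=> a Ca; rewrite /gT (hrep a Ca) E /mixI0 ffunE o10.
  move=> ai; rewrite set2D1.
  case: (pickP (fun a => C a && (a o1 == ai))) => [a1 /andP [Ca1 h1]|hn]; last first.
    apply: (@adapt_empty #|[set o0]|) => // a; by rewrite hn.
  apply: (@adapt_step _ _ _ g _ _ o0 (G (rep0 a1) z o0)); first by rewrite !inE eqxx.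
    move=> a /andP [Ca h]; rewrite /gT (hrep a Ca) E /mixI0 ffunE eqxx.
    have -> // : rep0 a = rep0 a1; apply: rep0_eq.
    have := agr_fix (hC a a1 Ca Ca1) h h1.
    apply: agrO_mono => j /andP []; rewrite /P01; case: (j =P o1) => //=; rewrite orbF => _ -> _; done.
  move=> ai'; rewrite set1D; exact: adapt_done.
Qed.



Lemma adapt_main k : forall (S : {set 'I_n.+2}) (C : pred O), #|S| = k.+2 ->
  [set o0; o1] \subset S ->
  (forall a a', C a -> C a' -> agrO (fun j => j \in S) a a') -> adapt g S C.
Proof.
elim: k => [|k IH] S C hS hsub hC.
  have : [set o0; o1] == S by rewrite eqEcard hsub hS cards2 o01.
  move/eqP => hSe; rewrite -hSe; apply: adapt_final => a a' Ca Ca'.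
  by apply: agrO_mono (hC a a' Ca Ca') => j /=; rewrite -hSe !inE.
have [i hiS hi01] : exists2 i, i \in S & i \notin [set o0; o1].
  apply/subsetPn; apply/negP => hs.
  by have := subset_leq_card hs; rewrite hS cards2 o01.
have hi2 : (2 <= i)%N.
  move: hi01; rewrite !inE negb_or => /andP [h0 h1].
  have e0 : nat_of_ord i != 0%N by apply: contra h0 => /eqP h; apply/eqP; apply: val_inj.
  have e1 : nat_of_ord i != 1%N by apply: contra h1 => /eqP h; apply/eqP; apply: val_inj.
  by move: e0 e1; case: (nat_of_ord i) => [|[|m]].
apply: (@adapt_step _ _ _ g S C i (dI i) hiS).
  move=> a _; have /card_le1_eqP hc : (#|Inp i| <= 1)%N by rewrite hclassical.
  exact: hc.
move=> ai; apply: IH.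
- by move: hS; rewrite (cardsD1 i) hiS => -[].
- by rewrite subsetD1 hsub hi01.
- move=> a a' /andP [Ca h] /andP [Ca' h'].
  apply: agrO_mono (agr_fix (hC a a' Ca Ca') h h') => j; by rewrite !inE andbC.
Qed.

Lemma adapt_gT : adapt g [set: 'I_n.+2] predT.
Proof.
apply: (@adapt_main n).
- by rewrite cardsT card_ord.
- by apply/subsetP => j; rewrite inE.
- by move=> a a' _ _; apply/forallP => j; rewrite inE.
Qed.

End Adapt.

Definition delta (b : O) : tbl := fun a x => (a == b)%:R.
Lemma delta_state b : is_state (delta b).
Proof.
split.
- by move=> a x; rewrite /delta; case: (a == b).
- by move=> x; rewrite /delta (bigD1 b) //= eqxx big1 ?addr0 // => a /negbTE ->.
- by [].
Qed.

Lemma main (Rt : finType) (M : Rt -> tbl -> R) :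
  is_measurement M -> is_mixture_of_basic M.
Proof.
move=> [hEff hSum].
have [r0 _] : exists r0 : Rt, true.
  case: (pickP (@predT Rt)) => [r0 _|h]; first by exists r0.
  exfalso; have E := hSum _ uni_state; rewrite big1 in E.
    by move/eqP: E; rewrite eq_sym oner_eq0.
  by move=> r _; have := h r.
have hRv : forall r, exists Rv : O -> I -> R,
    forall p, is_state p -> M r p = \sum_a \sum_x p a x * Rv a x.
  by move=> r; case: (hEff r).
pose Rv r := proj1_sig (constructive_indefinite_description _ (hRv r)).
have hRvE : forall r p, is_state p -> M r p = \sum_a \sum_x p a x * Rv r a x.
  by move=> r; exact: (proj2_sig (constructive_indefinite_description _ (hRv r))).
have hy : forall r, exists y : Kt -> R,
    forall v, 0 <= Rv r v.1 v.2 - \sum_k y k * HK k v.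
  move=> r; apply: nonneg_rep => p hp.
  have := (hEff r).2 p hp; rewrite hRvE // dotE => /andP [h _].
  by under eq_bigr do under eq_bigr do rewrite mulrC.
pose yr r := proj1_sig (constructive_indefinite_description _ (hy r)).
have hyr : forall r v, 0 <= Rv r v.1 v.2 - \sum_k yr r k * HK k v.
  by move=> r; exact: (proj2_sig (constructive_indefinite_description _ (hy r))).
pose Rr r a x := Rv r a x - \sum_k yr r k * HK k (a, x).
have Rr0 : forall r a x, 0 <= Rr r a x by move=> r a x; exact: (hyr r (a, x)).
have hMr : forall r p, is_state p -> M r p = \sum_a \sum_x p a x * Rr r a x.
  move=> r p hp; rewrite hRvE //.
  have := dot_lin (fun v => Rv r v.1 v.2) (yr r) (state_conep hp).
  rewrite !dotE => E.
  transitivity (\sum_a \sum_x Rv r a x * p a x).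
    by apply: eq_bigr => a _; apply: eq_bigr => x _; rewrite mulrC.
  rewrite -E; apply: eq_bigr => a _; apply: eq_bigr => x _; by rewrite mulrC.
pose c a x := \sum_r Rr r a x.
have c0 : forall a x, 0 <= c a x by move=> a x; apply: sumr_ge0 => r _.
have hc1 : forall p, is_state p -> \sum_a \sum_x p a x * c a x = 1.
  move=> p hp; rewrite -(hSum p hp).
  under eq_bigr do under eq_bigr do rewrite mulr_sumr.
  under eq_bigr do rewrite exchange_big /=.
  rewrite exchange_big /=; apply: eq_bigr => r _; by rewrite hMr.
have [y0 hy0] : exists y0 : Kt -> R, forall v, c v.1 v.2 - (v.2 == dI)%:R = \sum_k y0 k * HK k v.
  apply: zero_rep => p hp; rewrite dotE.
  under eq_bigr do under eq_bigr do rewrite mulrBl.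
  under eq_bigr do rewrite sumrB.
  rewrite sumrB.
  have -> : \sum_a \sum_x c a x * p a x = 1.
    rewrite -(hc1 p hp); apply: eq_bigr => a _; apply: eq_bigr => x _; exact: mulrC.
  have -> : \sum_a \sum_x (x == dI)%:R * p a x = 1.
    case: hp => _ hN _; rewrite -{2}(hN dI). apply: eq_bigr => a _; exact: sum_delta.
  by rewrite subrr.
have cE : forall b z, c b z = Tz y0 z + alp y0 o1 b z + alp y0 o0 b z.
  move=> b z; have := hy0 (b, z); rewrite /= => E.
  rewrite -[c b z](subrK ((z == dI)%:R)) E addrC c_decomp sum_alp.
  by rewrite [alp _ o0 _ _ + _]addrC addrA.
pose alA b z := Tz y0 z + alp y0 o1 b z.
pose alB b z := alp y0 o0 b z.
have hA1 : forall b b' z, agrO (pred1 o1) b b' -> alA b z = alA b' z.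
  by move=> b b' z h; rewrite /alA (alp_inv _ _ h).
have hB0 : forall b b' z, agrO (pred1 o0) b b' -> alB b z = alB b' z.
  by move=> b b' z h; rewrite /alB (alp_inv _ _ h).
have hcAB : forall b z, alA b z + alB b z = c b z by move=> b z; rewrite cE.
have hc : forall b z, 0 <= alA b z + alB b z by move=> b z; rewrite hcAB.
have hSA : forall b b' z, \sum_(z' | agrI (pred1 o1) z' z) alA b z' =
                              \sum_(z' | agrI (pred1 o1) z' z) alA b' z'.
  by move=> b b' z; rewrite /alA !big_split /= !alp_sum0.
have hSB : forall b b' z, \sum_(z' | agrI (pred1 o0) z' z) alB b z' =
                              \sum_(z' | agrI (pred1 o0) z' z) alB b' z'.
  by move=> b b' z; rewrite /alB !alp_sum0.
pose wA' := wA alA.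
pose wB' := wB alA alB.
have wA0 : forall b z, 0 <= wA' b z by move=> b z; exact: wA_ge0.
have wB0 : forall b z, 0 <= wB' b z by move=> b z; exact: (wB_ge0 hA1 hB0 hc).
have wAi : forall b b' z, agrO (pred1 o1) b b' -> wA' b z = wA' b' z.
  by move=> b b' z h; exact: (wA_inv hA1 z h).
have wBi : forall b b' z, agrO (pred1 o0) b b' -> wB' b z = wB' b' z.
  by move=> b b' z h; exact: (wB_inv alA hB0 z h).
have SAi' := SA_inv hSA.
have SBi' := SB_inv alA hSB.
have wABc : forall b z, wA' b z + wB' b z = c b z by move=> b z; rewrite /wA' /wB' wAB hcAB.
have norm : forall b, \sum_z (wA' b z + wB' b z) = 1.
  move=> b; have := hc1 _ (delta_state b).
  rewrite (bigD1 b) //= [X in _ + X]big1 ?addr0; last first.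
    by move=> a /negbTE hab; rewrite big1 // => x _; rewrite /delta hab mul0r.
  move=> <-; apply: eq_bigr => x _; by rewrite /delta eqxx mul1r wABc.
have Rsum : forall a x, \sum_r Rr r a x = wA' a x + wB' a x by move=> a x; rewrite wABc.
exists (Jt Rt), (qJ wA' wB' Rr r0), (@BJ Rt); split.
- move=> j; exact: (qJ_ge0 r0 wA0 wB0 Rr0 j).
- exact: (qJ_sum r0 norm Rsum).
- move=> j; exists (gJ j), (fun a => j.2 a (gJ j a)); split => //.
  exact: adapt_gT.
- move=> r p hp; exact: (BJ_mix r0 wA0 wB0 wAi wBi SAi' SBi' norm Rr0 Rsum hp (hMr r p hp)).
Qed.

End Box.


Unset Implicit Arguments.
Set Strict Implicit.
Set Printing Implicit Defensive.

(* Boxes are indexed by 'I_n.+2: box 0 = A_1, box 1 = A_2,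
   boxes 2..n+1 = B_1..B_n (classical: exactly one input). *)
Theorem lemma2 (R : realType) (n : nat) (Inp Out : 'I_n.+2 -> finType)
  (hInp : forall i, (0 < #|Inp i|)%N)
  (hOut : forall i, (0 < #|Out i|)%N)
  (hclassical : forall i : 'I_n.+2, (2 <= i)%N -> #|Inp i| = 1%N)
  (Rt : finType) (M : Rt -> table R Inp Out -> R)
  (hM : is_measurement M) :
  is_basic M \/ is_mixture_of_basic M.
Proof.
right; exact: (@main R n Inp Out hInp hOut hclassical Rt M hM).
Qed.
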